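(* Let $p$ be a prime, let $n,d\in\mathbb{Z}_{\ge1}$ and let $\tilde R\in\mathbb{P}^d(\mathbb{Z}/p^n\mathbb{Z})$. Let $v=(r_0,\dots,r_d)\in\mathbb{Z}^{d+1}\setminus\{0\}$ be primitive, i.e. $\gcd(r_0,\dots,r_d)=1$, such that $R=(r_0:\dots:r_d)\in\mathbb{P}^d(\mathbb{Q})$ reduces to $\tilde R$ modulo $p^n$. Then the lattice $L\subset\mathbb{Z}^{d+1}$ generated by $\{v\}\cup\{p^ne_i:0\le i\le d\}$ contains every vector $w\in\mathbb{Z}^{d+1}\setminus\{0\}$ such that the corresponding point of $\mathbb{P}^d(\mathbb{Q})$ reduces modulo $p^n$ to $\tilde R$. Moreover, if $u=a_0v+p^n(a_1e_0+a_2e_1+\cdots+a_{d+1}e_d)\in L$ with $a_0,\dots,a_{d+1}\in\mathbb{Z}$ and $p\nmid a_0$, then the point of $\mathbb{P}^d(\mathbb{Q})$ with coordinate vector $u$ reduces modulo $p^n$ to $\tilde R$.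
   Context: $e_0,\dots,e_d$ is the standard basis of $\mathbb{Z}^{d+1}$. The reduction of a point of $\mathbb{P}^d(\mathbb{Q})$ modulo $p^n$ is obtained by reducing a primitive integer coordinate vector modulo $p^n$. *)

(* Defs.v *)
From mathcomp Require Import all_boot all_order all_algebra.
Set Implicit Arguments. Unset Strict Implicit. Unset Printing Implicit Defensive.
Import Order.TTheory GRing.Theory Num.Theory.
Local Open Scope ring_scope.

Definition vgcd (d : nat) (x : 'I_d.+1 -> int) : nat :=
  \big[gcdn/0%N]_(i < d.+1) `|x i|%N.

Definition primitive (d : nat) (x : 'I_d.+1 -> int) : Prop := vgcd x = 1%N.

(* the primitive integer coordinate vector of the point (x_0 : ... : x_d),
   x nonzero (determined up to sign) *)
Definition prim_part (d : nat) (x : 'I_d.+1 -> int) : 'I_d.+1 -> int :=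
  fun i => (x i %/ (vgcd x)%:Z)%Z.

(* A representative of a point of P^d(Z/p^nZ): an integer vector whose
   reduction mod p^n has some unit coordinate (i.e. not divisible by p). *)
Definition proj_rep (p n d : nat) (rt : 'I_d.+1 -> int) : Prop :=
  exists i : 'I_d.+1, ~~ (p%:Z %| rt i)%Z.

(* two vectors mod p^n define the same point of P^d(Z/p^nZ):
   they differ by a unit of Z/p^nZ *)
Definition proj_eq_mod (p n d : nat) (x y : 'I_d.+1 -> int) : Prop :=
  exists lam : int, ~~ (p%:Z %| lam)%Z /\
    forall i : 'I_d.+1, (x i == lam * y i %[mod (p ^ n)%:Z])%Z.

(* the point of P^d(Q) with coordinate vector x (nonzero) reduces modulo p^n
   to the point of P^d(Z/p^nZ) represented by rt: reduce the primitive
   integer coordinate vector of the point modulo p^n *)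
Definition reduces_to (p n d : nat) (x rt : 'I_d.+1 -> int) : Prop :=
  proj_eq_mod p n (prim_part x) rt.

Definition in_lattice (p n d : nat) (v w : 'I_d.+1 -> int) : Prop :=
  exists (a0 : int) (a : 'I_d.+1 -> int),
    forall i : 'I_d.+1, w i = a0 * v i + (p ^ n)%:Z * a i.

(* Main.v *)
Require Import Defs.
From mathcomp Require Import all_boot all_order all_algebra.
From mathcomp Require Import ring.
Import Order.TTheory GRing.Theory Num.Theory.
Local Open Scope ring_scope.

Lemma dvdz_pn (p n : nat) : (1 <= n)%N -> (p%:Z %| (p ^ n)%:Z)%Z.
Proof. by move=> hn; rewrite dvdzE !absz_nat; apply: dvdn_exp. Qed.

Lemma cop_pn (p n : nat) (x : int) : prime p -> ~~ (p%:Z %| x)%Z ->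
  coprimez x (p ^ n)%:Z.
Proof.
move=> pp hx; rewrite coprimezE absz_nat; apply: coprimeXr.
by rewrite coprime_sym prime_coprime // -(absz_nat p) -dvdzE.
Qed.

Lemma euclidz (p : nat) (x y : int) : prime p -> ~~ (p%:Z %| x)%Z ->
  ~~ (p%:Z %| y)%Z -> ~~ (p%:Z %| x * y)%Z.
Proof.
move=> pp; rewrite !dvdzE abszM absz_nat Euclid_dvdM //.
by move=> /negPf -> /negPf ->.
Qed.

Lemma vgcd_dvd (d : nat) (x : 'I_d.+1 -> int) i : ((vgcd x)%:Z %| x i)%Z.
Proof. by rewrite dvdzE absz_nat; apply: (biggcdn_inf i). Qed.

Lemma dzD (d a b : int) : (d %| a)%Z -> (d %| b)%Z -> (d %| a + b)%Z.
Proof. by move=> ha hb; rewrite rpredD. Qed.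
Lemma dzB (d a b : int) : (d %| a)%Z -> (d %| b)%Z -> (d %| a - b)%Z.
Proof. by move=> ha hb; rewrite rpredB. Qed.

Theorem lemma3p11 (p n d : nat) (rt v : 'I_d.+1 -> int) :
  prime p -> (1 <= n)%N -> (1 <= d)%N ->
  proj_rep p n rt ->
  (exists i, v i != 0) -> primitive v -> reduces_to p n v rt ->
  (forall w : 'I_d.+1 -> int, (exists i, w i != 0) ->
     reduces_to p n w rt -> in_lattice p n v w)
  /\
  (forall (a0 : int) (a : 'I_d.+1 -> int), ~~ (p%:Z %| a0)%Z ->
     reduces_to p n (fun i => a0 * v i + (p ^ n)%:Z * a i) rt).
Proof.
move=> pp hn hd _ _ prv [lam [hlam hv]].
have ev : (forall i, (p ^ n)%:Z %| v i - lam * rt i)%Z.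
  move=> i; have := hv i; rewrite /prim_part prv divz1.
  by rewrite eqz_mod_dvd.
set P := (p ^ n)%:Z in ev *.
split.
- move=> w _ [mu [hmu hw]].
  have /coprimezP [[u wc] /= huw] := cop_pn _ n _ pp hlam.
  set g := vgcd w.
  pose a0 := g%:Z * mu * u.
  have key : (forall i, P %| w i - a0 * v i)%Z.
    move=> i.
    have ew : (P %| prim_part w i - mu * rt i)%Z by rewrite -eqz_mod_dvd; exact: hw.
    have wE : w i = prim_part w i * g%:Z by rewrite /prim_part divzK // vgcd_dvd.
    have -> : w i - a0 * v i = g%:Z * (prim_part w i - mu * rt i)
       + g%:Z * mu * rt i * (1 - u * lam) - g%:Z * mu * u * (v i - lam * rt i).
      rewrite {1}wE /a0; ring.
    have -> : 1 - u * lam = wc * P by rewrite -huw; ring.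
    apply: dzB; first apply: dzD.
    - exact: dvdz_mull ew.
    - by apply: dvdz_mull; apply: dvdz_mull; rewrite dvdzz.
    - exact: dvdz_mull (ev i).
  exists a0, (fun i => (w i - a0 * v i) %/ P)%Z => i.
  by rewrite [P * _]mulrC (divzK (key i)) addrC subrK.
- move=> a0 a ha0.
  set U := (fun i => a0 * v i + P * a i).
  set g := vgcd U.
  have pP : (p%:Z %| P)%Z by apply: dvdz_pn.
  have hg : ~~ (p%:Z %| g%:Z)%Z.
    apply/negP => pg.
    have : ((p %| vgcd v)%N)%Z.
      apply/dvdn_biggcdP => i _; rewrite -(absz_nat p) -dvdzE.
      have h1 : (p%:Z %| U i)%Z by exact: dvdz_trans pg (vgcd_dvd _ U i).
      have h2 : (p%:Z %| a0 * v i)%Z.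
        have -> : a0 * v i = U i - P * a i by rewrite /U; ring.
        by apply: dzB => //; apply: dvdz_mulr.
      apply/negPn/negP => hvi; move: h2; apply/negP; exact: euclidz.
    by rewrite prv Euclid_dvd1.
  have /coprimezP [[s t] /= hst] := cop_pn _ n _ pp hg.
  have hs : ~~ (p%:Z %| s)%Z.
    apply/negP => ps.
    have : (p%:Z %| s * g%:Z + t * P)%Z.
      by apply: dzD; [apply: dvdz_mulr | apply: dvdz_mull].
    rewrite hst.
    by rewrite dvdzE absz_nat Euclid_dvd1.
  exists (s * a0 * lam); split.
    by apply: euclidz => //; apply: euclidz.
  move=> i; rewrite eqz_mod_dvd.
  have uE : U i = prim_part U i * g%:Z by rewrite /prim_part divzK // vgcd_dvd.
  have -> : prim_part U i - s * a0 * lam * rt i =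
     prim_part U i * (1 - s * g%:Z) + s * (U i - a0 * lam * rt i).
    rewrite uE; ring.
  have -> : 1 - s * g%:Z = t * P by rewrite -hst; ring.
  have -> : U i - a0 * lam * rt i = a0 * (v i - lam * rt i) + P * a i.
    rewrite /U; ring.
  apply: dzD; first by apply: dvdz_mull; apply: dvdz_mull; rewrite dvdzz.
  apply: dvdz_mull; apply: dzD; first exact: dvdz_mull (ev i).
  by apply: dvdz_mulr; rewrite dvdzz.
Qed.
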